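(* For every $\widehat r\in\mathbb{N}$ and every $m\ge1$, \[\mathrm{Var}(\mu^{(b^m\widehat r+b^m-1)})=\frac1{b^m}\mathrm{Var}(\mu^{(\widehat r)})+\Big(1-\frac1{b^m}\Big)\mathrm{Var}(\mu^{(\widehat r+1)})+b-\frac1{b^{m-1}}.\]
   Context: Fix an integer $b\ge2$. For $n\in\mathbb{N}$ with base-$b$ digits $n_k$, $s(n):=\sum_kn_k$. For $r,n\in\mathbb{N}$, $\Delta^{(r)}(n):=s(n+r)-s(n)$, and $\mu^{(r)}(d):=\lim_{N\to\infty}\frac1N|\{n<N:\Delta^{(r)}(n)=d\}|$ for $d\in\mathbb{Z}$; these limits exist and $\mu^{(r)}$ is a probability measure on $\mathbb{Z}$ with finite moments. $\mathrm{Var}(\mu^{(r)})$ is its variance. *)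

(* Defs.v *)
From Stdlib Require Import Reals Lra Lia ZArith Arith List.
From Coquelicot Require Import Coquelicot.
Open Scope R_scope.

(* base-b digit sum: s(n) = sum_k n_k with n_k = (n / b^k) mod b.
   For b >= 2 all digits of index k > n vanish, so summing k = 0..n suffices. *)
Definition digsum (b n : nat) : nat :=
  fold_right Nat.add 0%nat (map (fun k => ((n / b ^ k) mod b)%nat) (seq 0 (S n))).

Definition Delta (b r n : nat) : Z :=
  (Z.of_nat (digsum b (n + r)) - Z.of_nat (digsum b n))%Z.

Definition cnt (b r : nat) (d : Z) (N : nat) : nat :=
  length (filter (fun n => Z.eqb (Delta b r n) d) (seq 0 N)).

Definition mu (b r : nat) (d : Z) : R :=
  real (Lim_seq (fun N => INR (cnt b r d N) / INR N)).

Definition zsum (f : Z -> R) : R :=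
  Series (fun j => f (Z.of_nat j)) + Series (fun j => f (- Z.of_nat (S j))%Z).

Definition Var_mu (b r : nat) : R :=
  zsum (fun d => IZR d ^ 2 * mu b r d) - (zsum (fun d => IZR d * mu b r d)) ^ 2.

(* Main.v *)
Require Import Defs.
From Stdlib Require Import Reals Lra Lia ZArith Arith List FunctionalExtensionality.
From Coquelicot Require Import Coquelicot.
Require Import Defs.
Open Scope R_scope.


Fixpoint dsK (b K n : nat) : nat :=
  match K with O => O | S K' => (n mod b + dsK b K' (n / b))%nat end.

Lemma fold_dsK b (hb : (2 <= b)%nat) : forall K s n,
  fold_right Nat.add 0%nat (map (fun k => ((n / b ^ k) mod b)%nat) (seq s K))
  = dsK b K (n / b ^ s).
Proof.
  induction K as [|K IH]; intros s n; simpl; auto.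
  rewrite IH. f_equal. f_equal.
  rewrite Nat.Div0.div_div. f_equal. simpl. rewrite Nat.mul_comm. reflexivity.
Qed.

Lemma digsum_dsK b (hb : (2 <= b)%nat) n : digsum b n = dsK b (S n) n.
Proof.
  unfold digsum. rewrite fold_dsK by auto. change (b ^ 0)%nat with 1%nat. rewrite Nat.div_1_r. reflexivity.
Qed.

Lemma dsK_0 b K : dsK b K 0 = 0%nat.
Proof. induction K; simpl; auto. rewrite Nat.Div0.mod_0_l, Nat.Div0.div_0_l. lia. Qed.

Lemma dsK_stable b (hb : (2 <= b)%nat) : forall K n j, (n < b ^ K)%nat ->
  dsK b (K + j) n = dsK b K n.
Proof.
  induction K as [|K IH]; intros n j H.
  - simpl in H. assert (n = 0%nat) by lia. subst. rewrite !dsK_0. auto.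
  - simpl. rewrite IH; auto.
    apply Nat.Div0.div_lt_upper_bound. simpl in H. lia.
Qed.

Lemma digsum_K b (hb : (2 <= b)%nat) K n : (n < b ^ K)%nat -> digsum b n = dsK b K n.
Proof.
  intros H. rewrite digsum_dsK by auto.
  assert (H2 : (n < b ^ S n)%nat) by (pose proof (Nat.pow_gt_lin_r b (S n)); lia).
  rewrite <- (dsK_stable b hb (S n) n K H2).
  rewrite <- (dsK_stable b hb K n (S n) H). f_equal. lia.
Qed.

Lemma digsum_step b (hb : (2 <= b)%nat) q u : (u < b)%nat ->
  digsum b (b * q + u) = (digsum b q + u)%nat.
Proof.
  intros Hu.
  assert (H2 : (q < b ^ q)%nat) by (apply Nat.pow_gt_lin_r; lia).
  rewrite (digsum_K b hb q q H2).
  rewrite (digsum_K b hb (S q)).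
  - simpl. rewrite <- (Nat.mod_unique (b*q+u) b q u) by auto.
    rewrite <- (Nat.div_unique (b*q+u) b q u) by auto. lia.
  - simpl. nia.
Qed.

Lemma digsum_0 b (hb : (2 <= b)%nat) : digsum b 0 = 0%nat.
Proof. unfold digsum. simpl. rewrite Nat.Div0.mod_0_l. lia. Qed.

Lemma digsum_small b (hb : (2 <= b)%nat) w : (w < b)%nat -> digsum b w = w.
Proof.
  intros H. replace w with (b * 0 + w)%nat at 1 by lia.
  rewrite digsum_step by auto. rewrite digsum_0 by auto. lia.
Qed.

Lemma digsum_block b (hb : (2 <= b)%nat) : forall m q u, (u < b ^ m)%nat ->
  digsum b (b ^ m * q + u) = (digsum b q + digsum b u)%nat.
Proof.
  induction m as [|m IH]; intros q u H.
  - simpl in H. assert (u = 0%nat) by lia. subst. rewrite digsum_0 by auto.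
    replace (b ^ 0 * q + 0)%nat with q by (simpl; lia). lia.
  - assert (Hb0 : b <> 0%nat) by lia.
    pose proof (Nat.div_mod u b Hb0) as Hd.
    pose proof (Nat.mod_upper_bound u b Hb0) as Hm.
    assert (Hq : (u / b < b ^ m)%nat).
    { apply Nat.Div0.div_lt_upper_bound. simpl in H. lia. }
    replace (b ^ S m * q + u)%nat with (b * (b ^ m * q + u / b) + u mod b)%nat
      by (simpl; rewrite Hd at 3; ring).
    rewrite digsum_step, IH by auto.
    replace (digsum b u) with (digsum b (b*(u/b) + u mod b)) by (rewrite <- Hd; reflexivity).
    rewrite (digsum_step b hb (u/b)) by auto. lia.
Qed.

Lemma digsum_full b (hb : (2 <= b)%nat) : forall m, digsum b (b ^ m - 1) = (m * (b - 1))%nat.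
Proof.
  induction m as [|m IH].
  - simpl. apply digsum_0; auto.
  - assert (Hp : (1 <= b ^ m)%nat) by (apply Nat.le_succ_l, Nat.neq_0_lt_0, Nat.pow_nonzero; lia).
    replace (b ^ S m - 1)%nat with (b * (b ^ m - 1) + (b - 1))%nat by (simpl; nia).
    rewrite digsum_step by lia. rewrite IH. nia.
Qed.



Lemma Delta1_low b (hb : (2 <= b)%nat) q u : (u < b - 1)%nat ->
  Delta b 1 (b * q + u) = 1%Z.
Proof.
  intros H. unfold Delta.
  replace (b * q + u + 1)%nat with (b * q + (u + 1))%nat by lia.
  rewrite !digsum_step by lia. lia.
Qed.

Lemma Delta1_high b (hb : (2 <= b)%nat) q :
  Delta b 1 (b * q + (b - 1)) = (Delta b 1 q + 1 - Z.of_nat b)%Z.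
Proof.
  unfold Delta.
  replace (b * q + (b - 1) + 1)%nat with (b * (q + 1) + 0)%nat by lia.
  rewrite !digsum_step by lia. lia.
Qed.

Lemma Delta1_le b (hb : (2 <= b)%nat) n : (Delta b 1 n <= 1)%Z.
Proof.
  induction n as [n IH] using (well_founded_induction lt_wf).
  assert (Hb0 : b <> 0%nat) by lia.
  pose proof (Nat.div_mod n b Hb0) as Hd.
  pose proof (Nat.mod_upper_bound n b Hb0) as Hm.
  destruct (Nat.lt_ge_cases (n mod b) (b - 1)) as [Hl|Hl].
  - rewrite Hd. rewrite Delta1_low by auto. lia.
  - assert (Hn : (n mod b = b - 1)%nat) by lia.
    rewrite Hd, Hn. rewrite Delta1_high by auto.
    assert (Hlt : (n / b < n)%nat) by (apply Nat.div_lt; lia).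
    specialize (IH _ Hlt). lia.
Qed.

Definition cgen (b r B u : nat) : Z :=
  if (u + r <? B)%nat then (Z.of_nat (digsum b (u + r)) - Z.of_nat (digsum b u))%Z
  else (Z.of_nat (digsum b (u + r - B)) - Z.of_nat (digsum b u))%Z.

Lemma Delta_gen b (hb : (2 <= b)%nat) K r q u : (r < b ^ K)%nat -> (u < b ^ K)%nat ->
  Delta b r (b ^ K * q + u) =
  ((if (u + r <? b ^ K)%nat then 0%Z else Delta b 1 q) + cgen b r (b ^ K) u)%Z.
Proof.
  intros Hr Hu. unfold cgen, Delta.
  destruct (Nat.ltb_spec (u + r) (b ^ K)) as [H|H].
  - replace (b ^ K * q + u + r)%nat with (b ^ K * q + (u + r))%nat by lia.
    rewrite !digsum_block by auto. lia.
  - replace (b ^ K * q + u + r)%nat with (b ^ K * (q + 1) + (u + r - b ^ K))%nat by nia.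
    rewrite !digsum_block by (auto; lia). lia.
Qed.

Definition cmain (b B u : nat) : Z :=
  if (u =? 0)%nat then Z.of_nat (digsum b (B - 1))
  else (Z.of_nat (digsum b (u - 1)) - Z.of_nat (digsum b u))%Z.

Lemma Delta_main b (hb : (2 <= b)%nat) m r' q u : (u < b ^ m)%nat ->
  Delta b (b ^ m * r' + b ^ m - 1) (b ^ m * q + u) =
  ((if (u =? 0)%nat then Delta b r' q else Delta b (r' + 1) q) + cmain b (b ^ m) u)%Z.
Proof.
  intros Hu. unfold cmain, Delta.
  assert (Hp : (1 <= b ^ m)%nat) by (apply Nat.le_succ_l, Nat.neq_0_lt_0, Nat.pow_nonzero; lia).
  destruct (Nat.eqb_spec u 0) as [H|H].
  - subst. replace (b ^ m * q + 0 + (b ^ m * r' + b ^ m - 1))%nat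
      with (b ^ m * (q + r') + (b ^ m - 1))%nat by nia.
    rewrite !digsum_block by lia. rewrite digsum_0 by auto. lia.
  - replace (b ^ m * q + u + (b ^ m * r' + b ^ m - 1))%nat
      with (b ^ m * (q + (r' + 1)) + (u - 1))%nat by nia.
    rewrite !digsum_block by lia. lia.
Qed.



Definition count (f : nat -> bool) (N : nat) : nat := length (filter f (seq 0 N)).
Fixpoint nsum (f : nat -> nat) (n : nat) : nat :=
  match n with O => O | S k => (nsum f k + f k)%nat end.
Fixpoint rsum (f : nat -> R) (n : nat) : R :=
  match n with O => 0 | S k => rsum f k + f k end.

Lemma count_S f N : count f (S N) = (count f N + (if f N then 1 else 0))%nat.
Proof.
  unfold count. rewrite seq_S, filter_app, length_app. simpl.
  destruct (f N); simpl; lia.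
Qed.

Lemma count_add f a k : count f (a + k) = (count f a + nsum (fun i => if f (a + i)%nat then 1 else 0) k)%nat.
Proof.
  induction k as [|k IH]; simpl.
  - rewrite Nat.add_0_r. lia.
  - rewrite Nat.add_succ_r, count_S, IH. lia.
Qed.

Lemma nsum_le1 (h : nat -> nat) k : (forall i, (h i <= 1)%nat) -> (nsum h k <= k)%nat.
Proof. intros H; induction k; simpl; auto. specialize (H k). lia. Qed.

Lemma count_le_add f a k : (count f a <= count f (a + k) <= count f a + k)%nat.
Proof.
  rewrite count_add. split; [lia|].
  assert (nsum (fun i => if f (a + i)%nat then 1 else 0) k <= k)%nat.
  { apply nsum_le1. intros i. destruct (f (a+i)%nat); lia. }
  lia.
Qed.

Lemma count_le f N : (count f N <= N)%nat.
Proof. pose proof (count_le_add f 0 N). unfold count at 1 in H. simpl in H. lia. Qed.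

Lemma nsum_plus f g n : nsum (fun i => f i + g i)%nat n = (nsum f n + nsum g n)%nat.
Proof. induction n; simpl; auto. rewrite IHn. lia. Qed.

Lemma nsum_ext_lt f g n : (forall i, (i < n)%nat -> f i = g i) -> nsum f n = nsum g n.
Proof. induction n; intros H; simpl; auto. rewrite IHn by (intros; apply H; lia). rewrite H by lia. auto. Qed.

Lemma count_mul (f : nat -> bool) (g : nat -> nat -> bool) B :
  (forall q u, (u < B)%nat -> f (B * q + u)%nat = g u q) ->
  forall M, count f (B * M) = nsum (fun u => count (g u) M) B.
Proof.
  intros H M. induction M as [|M IH].
  - rewrite Nat.mul_0_r. unfold count. simpl. clear H. induction B; simpl; [reflexivity|]. rewrite <- IHB. reflexivity.
  - rewrite Nat.mul_succ_r, count_add, IH.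
    rewrite <- nsum_plus. apply nsum_ext_lt. intros u Hu.
    rewrite count_S, H by auto. reflexivity.
Qed.

Lemma rsum_ext_lt f g n : (forall i, (i < n)%nat -> f i = g i) -> rsum f n = rsum g n.
Proof. induction n; intros H; simpl; auto. rewrite IHn by (intros; apply H; lia). rewrite H by lia. auto. Qed.

Lemma INR_nsum f n : INR (nsum f n) = rsum (fun i => INR (f i)) n.
Proof. induction n; simpl; auto. rewrite plus_INR, IHn. auto. Qed.

Lemma rsum_plus f g n : rsum (fun i => f i + g i) n = rsum f n + rsum g n.
Proof. induction n; simpl; [lra|]. rewrite IHn. lra. Qed.

Lemma rsum_scal c f n : rsum (fun i => c * f i) n = c * rsum f n.
Proof. induction n; simpl; [lra|]. rewrite IHn. lra. Qed.

Lemma rsum_const c n : rsum (fun _ => c) n = INR n * c.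
Proof. induction n; simpl rsum; [simpl; lra|]. rewrite IHn, S_INR. lra. Qed.

Lemma rsum_first f n : rsum f (S n) = f 0%nat + rsum (fun i => f (S i)) n.
Proof. induction n; simpl rsum in *; [lra|]. rewrite IHn. lra. Qed.

Lemma rsum_add f a k : rsum f (a + k) = rsum f a + rsum (fun i => f (a + i)%nat) k.
Proof. induction k; simpl; [rewrite Nat.add_0_r; lra|]. rewrite Nat.add_succ_r. simpl. rewrite IHk. lra. Qed.

Lemma is_lim_seq_rsum (F : nat -> nat -> R) (l : nat -> R) B :
  (forall u, (u < B)%nat -> is_lim_seq (F u) (l u)) ->
  is_lim_seq (fun N => rsum (fun u => F u N) B) (rsum l B).
Proof.
  induction B as [|B IH]; intros H; simpl.
  - apply is_lim_seq_const.
  - apply is_lim_seq_plus'; [apply IH; intros; apply H; lia | apply H; lia].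
Qed.

Lemma lim_invN : is_lim_seq (fun n => / INR n) 0.
Proof.
  replace (Finite 0) with (Rbar_inv p_infty) by reflexivity.
  apply is_lim_seq_inv; [apply is_lim_seq_INR | discriminate].
Qed.

Lemma ratio_lim B : (1 <= B)%nat -> is_lim_seq (fun N => INR (N / B) / INR N) (/ INR B).
Proof.
  intros HB.
  assert (HB' : 0 < INR B) by (apply lt_0_INR; lia).
  apply is_lim_seq_le_le_loc with (u := fun N => / INR B - / INR N) (w := fun _ => / INR B).
  - exists 1%nat. intros N HN.
    assert (HN' : 0 < INR N) by (apply lt_0_INR; lia).
    assert (Hb0 : B <> 0%nat) by lia.
    pose proof (Nat.div_mod N B Hb0) as Hd.
    pose proof (Nat.mod_upper_bound N B Hb0) as Hm.
    assert (E1 : INR B * INR (N / B) <= INR N).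
    { rewrite <- mult_INR. apply le_INR. lia. }
    assert (E2 : INR N <= INR B * INR (N / B) + INR B).
    { rewrite <- mult_INR, <- plus_INR. apply le_INR. lia. }
    assert (HBN : 0 < INR B * INR N) by nra.
    split.
    + assert (Eq : INR (N / B) / INR N - (/ INR B - / INR N) =
        (INR B * INR (N / B) + INR B - INR N) / (INR B * INR N)) by (field; lra).
      assert (0 <= (INR B * INR (N / B) + INR B - INR N) / (INR B * INR N)).
      { apply Rdiv_le_0_compat; lra. }
      lra.
    + assert (Eq : / INR B - INR (N / B) / INR N =
        (INR N - INR B * INR (N / B)) / (INR B * INR N)) by (field; lra).
      assert (0 <= (INR N - INR B * INR (N / B)) / (INR B * INR N)).
      { apply Rdiv_le_0_compat; lra. }
      lra.
  - pose proof (is_lim_seq_minus' _ _ _ _ (is_lim_seq_const (/ INR B)) lim_invN) as H.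
    rewrite Rminus_0_r in H. exact H.
  - apply is_lim_seq_const.
Qed.

Lemma filterlim_div B : (1 <= B)%nat -> filterlim (fun N => (N / B)%nat) eventually eventually.
Proof.
  intros HB P [N0 HP]. exists (N0 * B)%nat. intros n Hn. apply HP.
  apply Nat.div_le_lower_bound; lia.
Qed.

Lemma dens_mix (f : nat -> bool) (g : nat -> nat -> bool) (B : nat) (delta : nat -> R) :
  (1 <= B)%nat ->
  (forall q u, (u < B)%nat -> f (B * q + u)%nat = g u q) ->
  (forall u, (u < B)%nat -> is_lim_seq (fun N => INR (count (g u) N) / INR N) (delta u)) ->
  is_lim_seq (fun N => INR (count f N) / INR N) (/ INR B * rsum delta B).
Proof.
  intros HB Hfg Hg.
  set (y := fun N => rsum (fun u => INR (count (g u) (N / B)) / INR (N / B)) B * (INR (N / B) / INR N)).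
  assert (Hy : is_lim_seq y (/ INR B * rsum delta B)).
  { unfold y. rewrite Rmult_comm. apply is_lim_seq_mult'.
    - apply is_lim_seq_rsum. intros u Hu.
      apply (is_lim_seq_subseq (fun N => INR (count (g u) N) / INR N)); auto.
      apply filterlim_div; auto.
    - apply ratio_lim; auto. }
  apply is_lim_seq_le_le_loc with (u := y) (w := fun N => y N + INR B * / INR N); auto.
  2:{ pose proof (is_lim_seq_plus' _ _ _ _ Hy
        (is_lim_seq_mult' _ _ _ _ (is_lim_seq_const (INR B)) lim_invN)) as H.
      rewrite Rmult_0_r, Rplus_0_r in H. exact H. }
  exists B. intros N HN.
  assert (Hb0 : B <> 0%nat) by lia.
  assert (HM : (1 <= N / B)%nat) by (apply Nat.div_le_lower_bound; lia).
  assert (HM' : 0 < INR (N / B)) by (apply lt_0_INR; lia).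
  assert (HN' : 0 < INR N) by (apply lt_0_INR; lia).
  assert (Ey : y N = INR (count f (B * (N / B))) / INR N).
  { unfold y. rewrite (count_mul f g B Hfg), INR_nsum.
    clear -HM' HN'. generalize (N / B)%nat HM'. intros M HM. clear HM'.
    induction B as [|B IH]; simpl; [lra|].
    rewrite Rmult_plus_distr_r, IH. field. lra. }
  rewrite Ey.
  pose proof (Nat.div_mod N B Hb0) as Hd.
  pose proof (Nat.mod_upper_bound N B Hb0) as Hm.
  pose proof (count_le_add f (B * (N / B)) (N mod B)) as [C1 C2].
  rewrite <- Hd in C1, C2.
  apply le_INR in C1. apply le_INR in C2. rewrite plus_INR in C2.
  assert (INR (N mod B) <= INR B) by (apply le_INR; lia).
  unfold Rdiv. split.
  - apply Rmult_le_compat_r; auto. left. apply Rinv_0_lt_compat. auto.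
  - rewrite <- Rmult_plus_distr_r. apply Rmult_le_compat_r; [left; apply Rinv_0_lt_compat; auto|lra].
Qed.

Lemma dens_const (c : bool) : is_lim_seq (fun N => INR (count (fun _ => c) N) / INR N) ((if c then 1 else 0) : R).
Proof.
  assert (Hc : forall N, count (fun _ => c) N = if c then N else 0%nat).
  { intros N. induction N; [unfold count; simpl; destruct c; auto|].
    rewrite count_S, IHN. destruct c; lia. }
  destruct c.
  - apply is_lim_seq_ext_loc with (u := fun _ => 1); [|apply is_lim_seq_const].
    exists 1%nat. intros N HN. rewrite Hc. field. apply not_0_INR. lia.
  - apply is_lim_seq_ext with (u := fun _ => 0); [|apply is_lim_seq_const].
    intros N. rewrite Hc. simpl. unfold Rdiv. ring.
Qed.

Lemma dens_bounds f (l : R) : is_lim_seq (fun N => INR (count f N) / INR N) l -> 0 <= l <= 1.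
Proof.
  intros H.
  assert (Hb : forall N, 0 <= INR (count f N) / INR N <= 1).
  { intros N. pose proof (count_le f N).
    destruct N as [|N].
    - unfold Rdiv. replace (INR 0) with 0 by reflexivity. rewrite Rinv_0, Rmult_0_r. lra.
    - assert (0 < INR (S N)) by (apply lt_0_INR; lia).
      apply le_INR in H0. split.
      + apply Rdiv_le_0_compat; auto. apply pos_INR.
      + apply Rmult_le_reg_r with (INR (S N)); auto. unfold Rdiv.
        rewrite Rmult_assoc, Rinv_l by lra. lra. }
  split.
  - pose proof (is_lim_seq_le (fun _ => 0) _ 0 l (fun N => proj1 (Hb N)) (is_lim_seq_const 0) H). simpl in H0. auto.
  - pose proof (is_lim_seq_le _ (fun _ => 1) l 1 (fun N => proj2 (Hb N)) H (is_lim_seq_const 1)). simpl in H0. auto.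
Qed.

Definition cntF (F : nat -> Z) (d : Z) : nat -> bool := fun n => Z.eqb (F n) d.
Definition has_dist (F : nat -> Z) (p : Z -> R) : Prop :=
  forall d, is_lim_seq (fun N => INR (count (cntF F d) N) / INR N) (p d).

Lemma mu_of_dist b r p : has_dist (Delta b r) p -> forall d, mu b r d = p d.
Proof.
  intros H d. unfold mu. change (fun N => INR (cnt b r d N) / INR N)
    with (fun N => INR (count (cntF (Delta b r) d) N) / INR N).
  rewrite (is_lim_seq_unique _ _ (H d)). reflexivity.
Qed.

Lemma dist_mu b r : (forall d, exists l : R, is_lim_seq (fun N => INR (count (cntF (Delta b r) d) N) / INR N) l) ->
  has_dist (Delta b r) (mu b r).
Proof.
  intros H d. destruct (H d) as [l Hl].
  unfold mu. change (fun N => INR (cnt b r d N) / INR N)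
    with (fun N => INR (count (cntF (Delta b r) d) N) / INR N).
  rewrite (is_lim_seq_unique _ _ Hl). exact Hl.
Qed.

Definition pm0 (d : Z) : R := if Z.eqb 0 d then 1 else 0.

Lemma dist_zero : has_dist (fun _ => 0%Z) pm0.
Proof. intros d. apply (dens_const (Z.eqb 0 d)). Qed.

Lemma mix_dist (F : nat -> Z) (G : nat -> nat -> Z) (c : nat -> Z) (P : nat -> Z -> R) B :
  (1 <= B)%nat ->
  (forall q u, (u < B)%nat -> F (B * q + u)%nat = (G u q + c u)%Z) ->
  (forall u, (u < B)%nat -> has_dist (G u) (P u)) ->
  has_dist F (fun d => / INR B * rsum (fun u => P u (d - c u)%Z) B).
Proof.
  intros HB HF HG d.
  apply (dens_mix (cntF F d) (fun u => cntF (G u) (d - c u)%Z) B (fun u => P u (d - c u)%Z)); auto.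
  2:{ intros u Hu. apply (HG u Hu). }
  intros q u Hu. unfold cntF. rewrite HF by auto.
  destruct (Z.eqb_spec (G u q + c u) d); destruct (Z.eqb_spec (G u q) (d - c u)); auto; lia.
Qed.



Definition zsummable (f : Z -> R) : Prop :=
  ex_series (fun j => f (Z.of_nat j)) /\ ex_series (fun j => f (- Z.of_nat (S j))%Z).

Lemma exs_plus (a c : nat -> R) : ex_series a -> ex_series c -> ex_series (fun n => a n + c n).
Proof. intros Ha Hc. exact (ex_series_plus a c Ha Hc). Qed.

Lemma exs_scal (k : R) (a : nat -> R) : ex_series a -> ex_series (fun n => k * a n).
Proof. intros Ha. exact (ex_series_scal_l k a Ha). Qed.

Lemma exs_zero : ex_series (fun _ : nat => 0).
Proof.
  assert (H : ex_series (fun n => 0 * (/2) ^ n)).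
  { apply exs_scal. apply ex_series_geom. rewrite Rabs_pos_eq; lra. }
  revert H. apply ex_series_ext. intros; simpl; ring.
Qed.

Lemma Series_zero : Series (fun _ : nat => 0) = 0.
Proof.
  rewrite (Series_ext _ (fun n => 0 * 1)) by (intros; ring).
  rewrite Series_scal_l. ring.
Qed.

Lemma zsummable_plus f g : zsummable f -> zsummable g -> zsummable (fun d => f d + g d).
Proof. intros [A B] [C D]. split; apply exs_plus; auto. Qed.

Lemma zsum_plus f g : zsummable f -> zsummable g -> zsum (fun d => f d + g d) = zsum f + zsum g.
Proof. intros [A B] [C D]. unfold zsum. rewrite !Series_plus by auto. ring. Qed.

Lemma zsummable_scal k f : zsummable f -> zsummable (fun d => k * f d).
Proof. intros [A B]. split; apply exs_scal; auto. Qed.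

Lemma zsum_scal k f : zsum (fun d => k * f d) = k * zsum f.
Proof. unfold zsum. rewrite !Series_scal_l. ring. Qed.

Lemma zsummable_zero : zsummable (fun _ => 0).
Proof. split; apply exs_zero. Qed.

Lemma zsum_zero : zsum (fun _ => 0) = 0.
Proof. unfold zsum. rewrite !Series_zero. ring. Qed.

Lemma zsummable_rsum (F : nat -> Z -> R) n : (forall u, (u < n)%nat -> zsummable (F u)) ->
  zsummable (fun d => rsum (fun u => F u d) n).
Proof.
  induction n; intros H; simpl.
  - apply zsummable_zero.
  - apply zsummable_plus; [apply IHn; intros; apply H; lia | apply H; lia].
Qed.

Lemma zsum_rsum (F : nat -> Z -> R) n : (forall u, (u < n)%nat -> zsummable (F u)) ->
  zsum (fun d => rsum (fun u => F u d) n) = rsum (fun u => zsum (F u)) n.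
Proof.
  induction n; intros H; simpl.
  - apply zsum_zero.
  - rewrite zsum_plus; [| apply zsummable_rsum; intros; apply H; lia | apply H; lia].
    rewrite IHn by (intros; apply H; lia). reflexivity.
Qed.

Lemma zshift_p1 f : zsummable f ->
  zsummable (fun d => f (d + 1)%Z) /\ zsum (fun d => f (d + 1)%Z) = zsum f.
Proof.
  intros [A B].
  set (a := fun j => f (- Z.of_nat j)%Z).
  assert (Ha : ex_series a).
  { apply ex_series_incr_1. unfold a. exact B. }
  assert (E1 : (fun j => f (Z.of_nat j + 1)%Z) = (fun j => f (Z.of_nat (S j)))).
  { apply functional_extensionality; intros j. f_equal. lia. }
  assert (E2 : (fun j => f (- Z.of_nat (S j) + 1)%Z) = a).
  { apply functional_extensionality; intros j. unfold a. f_equal. lia. }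
  split.
  - split.
    + rewrite E1. apply (ex_series_incr_1 (fun j => f (Z.of_nat j))). exact A.
    + rewrite E2. exact Ha.
  - unfold zsum. rewrite E1, E2.
    rewrite (Series_incr_1 (fun j => f (Z.of_nat j))) by auto.
    rewrite (Series_incr_1 a) by auto. unfold a. simpl. ring.
Qed.

Lemma zshift_m1 f : zsummable f ->
  zsummable (fun d => f (d - 1)%Z) /\ zsum (fun d => f (d - 1)%Z) = zsum f.
Proof.
  intros [A B].
  set (a := fun j => f (Z.of_nat j - 1)%Z).
  assert (Ea : (fun k => a (S k)) = (fun j => f (Z.of_nat j))).
  { apply functional_extensionality; intros j. unfold a. f_equal. lia. }
  assert (Ha : ex_series a).
  { apply ex_series_incr_1. rewrite Ea. exact A. }
  assert (E2 : (fun j => f (- Z.of_nat (S j) - 1)%Z) = (fun j => f (- Z.of_nat (S (S j)))%Z)).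
  { apply functional_extensionality; intros j. f_equal. lia. }
  split.
  - split.
    + exact Ha.
    + rewrite E2. apply (ex_series_incr_1 (fun j => f (- Z.of_nat (S j))%Z)). exact B.
  - unfold zsum. fold a. rewrite E2.
    rewrite (Series_incr_1 a) by auto. rewrite Ea.
    rewrite (Series_incr_1 (fun j => f (- Z.of_nat (S j))%Z)) by auto.
    unfold a. simpl. replace (0 - 1)%Z with (- 1)%Z by lia. ring.
Qed.

Lemma zshift f c : zsummable f ->
  zsummable (fun d => f (d - c)%Z) /\ zsum (fun d => f (d - c)%Z) = zsum f.
Proof.
  intros Hf.
  assert (Hpos : forall n : nat, zsummable (fun d => f (d - Z.of_nat n)%Z) /\
                 zsum (fun d => f (d - Z.of_nat n)%Z) = zsum f).
  { induction n as [|n [IH1 IH2]].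
    - replace (fun d => f (d - Z.of_nat 0)%Z) with f; [split; auto|].
      apply functional_extensionality; intros d. f_equal. lia.
    - destruct (zshift_m1 _ IH1) as [H1 H2].
      replace (fun d => f (d - Z.of_nat (S n))%Z) with (fun d => f (d - 1 - Z.of_nat n)%Z).
      + split; auto. rewrite H2. auto.
      + apply functional_extensionality; intros d. f_equal. lia. }
  assert (Hneg : forall n : nat, zsummable (fun d => f (d + Z.of_nat n)%Z) /\
                 zsum (fun d => f (d + Z.of_nat n)%Z) = zsum f).
  { induction n as [|n [IH1 IH2]].
    - replace (fun d => f (d + Z.of_nat 0)%Z) with f; [split; auto|].
      apply functional_extensionality; intros d. f_equal. lia.
    - destruct (zshift_p1 _ IH1) as [H1 H2].
      replace (fun d => f (d + Z.of_nat (S n))%Z) with (fun d => f (d + 1 + Z.of_nat n)%Z).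
      + split; auto. rewrite H2. auto.
      + apply functional_extensionality; intros d. f_equal. lia. }
  destruct (Z_le_gt_dec 0 c) as [Hc|Hc].
  - replace (fun d => f (d - c)%Z) with (fun d => f (d - Z.of_nat (Z.to_nat c))%Z); auto.
    apply functional_extensionality; intros d. f_equal. lia.
  - replace (fun d => f (d - c)%Z) with (fun d => f (d + Z.of_nat (Z.to_nat (- c)))%Z); auto.
    apply functional_extensionality; intros d. f_equal. lia.
Qed.

Definition M0 (p : Z -> R) := zsum p.
Definition M1 (p : Z -> R) := zsum (fun d => IZR d * p d).
Definition M2 (p : Z -> R) := zsum (fun d => IZR d ^ 2 * p d).
Definition good (p : Z -> R) : Prop :=
  zsummable p /\ zsummable (fun d => IZR d * p d) /\ zsummable (fun d => IZR d ^ 2 * p d).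

Lemma good_shift p c : good p ->
  good (fun d => p (d - c)%Z) /\
  M0 (fun d => p (d - c)%Z) = M0 p /\
  M1 (fun d => p (d - c)%Z) = M1 p + IZR c * M0 p /\
  M2 (fun d => p (d - c)%Z) = M2 p + 2 * IZR c * M1 p + IZR c ^ 2 * M0 p.
Proof.
  intros [G0 [G1 G2]].
  set (h1 := fun e => IZR e * p e + IZR c * p e).
  set (h2 := fun e => IZR e ^ 2 * p e + (2 * IZR c) * (IZR e * p e) + IZR c ^ 2 * p e).
  assert (S1 : zsummable h1) by (apply zsummable_plus; auto; apply zsummable_scal; auto).
  assert (S2 : zsummable h2).
  { apply zsummable_plus; [apply zsummable_plus|]; auto; apply zsummable_scal; auto. }
  assert (E1 : (fun d => IZR d * p (d - c)%Z) = (fun d => h1 (d - c)%Z)).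
  { apply functional_extensionality; intros d. unfold h1. rewrite minus_IZR. ring. }
  assert (E2 : (fun d => IZR d ^ 2 * p (d - c)%Z) = (fun d => h2 (d - c)%Z)).
  { apply functional_extensionality; intros d. unfold h2. rewrite minus_IZR. ring. }
  destruct (zshift p c G0) as [A0 B0].
  destruct (zshift h1 c S1) as [A1 B1].
  destruct (zshift h2 c S2) as [A2 B2].
  unfold good, M0, M1, M2. rewrite E1, E2.
  split; [split; [|split]; auto|].
  split; auto. split.
  - rewrite B1. unfold h1. rewrite zsum_plus, zsum_scal; auto. apply zsummable_scal; auto.
  - rewrite B2. unfold h2. rewrite !zsum_plus, !zsum_scal; auto.
    + apply zsummable_scal; auto.
    + apply zsummable_plus; auto; apply zsummable_scal; auto.
    + apply zsummable_scal; auto.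
Qed.

Lemma mix_good (P : nat -> Z -> R) (c : nat -> Z) (B : nat) :
  (forall u, (u < B)%nat -> good (P u)) ->
  let q := fun d => / INR B * rsum (fun u => P u (d - c u)%Z) B in
  good q /\
  M0 q = / INR B * rsum (fun u => M0 (P u)) B /\
  M1 q = / INR B * rsum (fun u => M1 (P u) + IZR (c u) * M0 (P u)) B /\
  M2 q = / INR B * rsum (fun u => M2 (P u) + 2 * IZR (c u) * M1 (P u) + IZR (c u) ^ 2 * M0 (P u)) B.
Proof.
  intros HP q.
  assert (HS : forall u, (u < B)%nat -> good (fun d => P u (d - c u)%Z) /\
    M0 (fun d => P u (d - c u)%Z) = M0 (P u) /\
    M1 (fun d => P u (d - c u)%Z) = M1 (P u) + IZR (c u) * M0 (P u) /\
    M2 (fun d => P u (d - c u)%Z) = M2 (P u) + 2 * IZR (c u) * M1 (P u) + IZR (c u) ^ 2 * M0 (P u)).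
  { intros u Hu. apply good_shift. auto. }
  assert (E1 : (fun d => IZR d * q d) = (fun d => / INR B * rsum (fun u => IZR d * P u (d - c u)%Z) B)).
  { apply functional_extensionality; intros d. unfold q. rewrite rsum_scal. ring. }
  assert (E2 : (fun d => IZR d ^ 2 * q d) = (fun d => / INR B * rsum (fun u => IZR d ^ 2 * P u (d - c u)%Z) B)).
  { apply functional_extensionality; intros d. unfold q. rewrite rsum_scal. ring. }
  assert (Z0 : forall u, (u < B)%nat -> zsummable (fun d => P u (d - c u)%Z)).
  { intros u Hu. apply (HS u Hu). }
  assert (Z1 : forall u, (u < B)%nat -> zsummable (fun d => IZR d * P u (d - c u)%Z)).
  { intros u Hu. apply (HS u Hu). }
  assert (Z2 : forall u, (u < B)%nat -> zsummable (fun d => IZR d ^ 2 * P u (d - c u)%Z)).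
  { intros u Hu. apply (HS u Hu). }
  unfold good, M0, M1, M2. rewrite E1, E2. unfold q.
  split; [split; [|split]; apply zsummable_scal; apply zsummable_rsum; auto|].
  rewrite !zsum_scal, !zsum_rsum by auto.
  split; [|split]; f_equal; apply rsum_ext_lt; intros u Hu; apply (HS u Hu).
Qed.



Section B.
Variable b : nat.
Hypothesis hb : (2 <= b)%nat.

Definition g1 (d : Z) (u q : nat) : bool :=
  if (u <? b - 1)%nat then Z.eqb 1 d else Z.eqb (Delta b 1 q) (d + Z.of_nat (b - 1)).

Lemma g1_rel d q u : (u < b)%nat -> cntF (Delta b 1) d (b * q + u)%nat = g1 d u q.
Proof.
  intros Hu. unfold cntF, g1.
  destruct (Nat.ltb_spec u (b - 1)) as [H|H].
  - rewrite Delta1_low by auto. reflexivity.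
  - assert (u = b - 1)%nat by lia. subst u. rewrite Delta1_high by auto.
    destruct (Z.eqb_spec (Delta b 1 q + 1 - Z.of_nat b) d);
    destruct (Z.eqb_spec (Delta b 1 q) (d + Z.of_nat (b - 1))); auto; lia.
Qed.

Lemma count_false f N : (forall n, f n = false) -> count f N = 0%nat.
Proof.
  intros H. unfold count. induction N; auto. rewrite seq_S, filter_app, length_app.
  simpl. rewrite H. simpl. lia.
Qed.

Lemma D1_exists : forall d, exists l : R,
  is_lim_seq (fun N => INR (count (cntF (Delta b 1) d) N) / INR N) l.
Proof.
  assert (Hk : forall k : nat, forall d, (1 - d < Z.of_nat k)%Z -> exists l : R,
    is_lim_seq (fun N => INR (count (cntF (Delta b 1) d) N) / INR N) l).
  { induction k as [|k IH]; intros d Hd.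
    - exists 0. apply is_lim_seq_ext with (u := fun _ => 0); [|apply is_lim_seq_const].
      intros N. rewrite count_false. simpl. unfold Rdiv. ring.
      intros n. unfold cntF. apply Z.eqb_neq. pose proof (Delta1_le b hb n). lia.
    - destruct (Z_le_gt_dec 2 d) as [H2|H2].
      + exists 0. apply is_lim_seq_ext with (u := fun _ => 0); [|apply is_lim_seq_const].
        intros N. rewrite count_false. simpl. unfold Rdiv. ring.
        intros n. unfold cntF. apply Z.eqb_neq. pose proof (Delta1_le b hb n). lia.
      + destruct (IH (d + Z.of_nat (b - 1))%Z) as [l Hl]; [lia|].
        exists (/ INR b * rsum (fun u => if (u <? b - 1)%nat then (if Z.eqb 1 d then 1 else 0) else l) b).
        apply (dens_mix _ (g1 d)); [lia| intros; apply g1_rel; auto|].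
        intros u Hu. unfold g1. destruct (Nat.ltb_spec u (b - 1)).
        * apply (dens_const (Z.eqb 1 d)).
        * exact Hl. }
  intros d. apply (Hk (S (Z.to_nat (1 - d)))). lia.
Qed.

Lemma D1_dist : has_dist (Delta b 1) (mu b 1).
Proof. apply dist_mu. apply D1_exists. Qed.

Lemma rsum_last f n : rsum f (S n) = rsum f n + f n.
Proof. reflexivity. Qed.

Lemma D1_rec d : mu b 1 d = / INR b * (INR (b - 1) * (if Z.eqb 1 d then 1 else 0) + mu b 1 (d + Z.of_nat (b - 1))%Z).
Proof.
  assert (H := dens_mix (cntF (Delta b 1) d) (g1 d) b
    (fun u => if (u <? b - 1)%nat then (if Z.eqb 1 d then 1 else 0) else mu b 1 (d + Z.of_nat (b - 1))%Z)).
  unfold mu at 1. change (fun N => INR (cnt b 1 d N) / INR N)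
    with (fun N => INR (count (cntF (Delta b 1) d) N) / INR N).
  rewrite (is_lim_seq_unique _ _ (H ltac:(lia) ltac:(intros; apply g1_rel; auto) ltac:(
     intros u Hu; unfold g1; destruct (Nat.ltb_spec u (b - 1));
     [apply (dens_const (Z.eqb 1 d)) | apply D1_dist]))).
  simpl real. f_equal.
  replace b with (S (b - 1)) at 1 by lia. rewrite rsum_last.
  rewrite (rsum_ext_lt _ (fun _ => if Z.eqb 1 d then 1 else 0)).
  - rewrite rsum_const. destruct (Nat.ltb_spec (b - 1) (b - 1)); [lia|]. ring.
  - intros i Hi. destruct (Nat.ltb_spec i (b - 1)); [auto|lia].
Qed.

Lemma D1_big d : (2 <= d)%Z -> mu b 1 d = 0.
Proof.
  intros Hd. unfold mu. change (fun N => INR (cnt b 1 d N) / INR N)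
    with (fun N => INR (count (cntF (Delta b 1) d) N) / INR N).
  rewrite (is_lim_seq_unique _ 0); [reflexivity|].
  apply is_lim_seq_ext with (u := fun _ => 0); [|apply is_lim_seq_const].
  intros N. rewrite count_false. simpl. unfold Rdiv. ring.
  intros n. unfold cntF. apply Z.eqb_neq. pose proof (Delta1_le b hb n). lia.
Qed.

End B.



Lemma bern x n : 0 <= x <= 1 -> 1 - INR n * x <= (1 - x) ^ n.
Proof.
  intros Hx. induction n.
  - simpl. lra.
  - rewrite S_INR. simpl. assert (0 <= 1 - x) by lra.
    assert ((1-x)*(1 - INR n * x) <= (1-x)*(1-x)^n) by (apply Rmult_le_compat_l; lra).
    pose proof (pos_INR n). assert (0 <= INR n * (x * x)) by (apply Rmult_le_pos; nra). nra.
Qed.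

Lemma pow_le1 x n : 0 <= x <= 1 -> x ^ n <= 1.
Proof.
  intros Hx. induction n; simpl; [lra|]. assert (0 <= x ^ n) by (apply pow_le; lra). nra.
Qed.

Lemma exs_ev0 (a : nat -> R) n0 : (forall j, (n0 <= j)%nat -> a j = 0) -> ex_series a.
Proof.
  intros H. apply (ex_series_incr_n a n0).
  apply (ex_series_ext (fun _ => 0)); [|apply exs_zero].
  intros n. symmetry. apply H. lia.
Qed.

Lemma majorant (rho : R) : 0 <= rho < 1 ->
  ex_series (fun j => INR (S j) * INR (S (S j)) * rho ^ j).
Proof.
  intros Hr.
  set (a := fun _ : nat => 1).
  assert (Hc : CV_radius a = 1).
  { rewrite (CV_radius_finite_DAlembert a 1).
    - rewrite Rinv_1. reflexivity.
    - intros n. unfold a. lra.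
    - lra.
    - apply is_lim_seq_ext with (u := fun _ => 1); [|apply is_lim_seq_const].
      intros n. unfold a. rewrite Rdiv_1_r, Rabs_R1. reflexivity. }
  assert (H : ex_pseries (PS_derive (PS_derive a)) rho).
  { apply ex_pseries_derive. rewrite CV_radius_derive, Hc. simpl.
    rewrite Rabs_pos_eq; lra. }
  apply ex_pseries_R in H. revert H. apply ex_series_ext.
  intros n. unfold PS_derive, a. rewrite Rmult_1_r. reflexivity.
Qed.

Section B.
Variable b : nat.
Hypothesis hb : (2 <= b)%nat.

Let rho := 1 - / INR b.

Lemma INRb_pos : 2 <= INR b.
Proof. replace 2 with (INR 2) by (simpl; lra). apply le_INR. auto. Qed.

Lemma rho_bounds : 0 <= rho < 1.
Proof.
  pose proof INRb_pos. unfold rho.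
  assert (0 < / INR b <= / 2) by (split; [apply Rinv_0_lt_compat; lra | apply Rinv_le_contravar; lra]).
  lra.
Qed.

Lemma invb_le : / INR b <= rho ^ (b - 1).
Proof.
  pose proof INRb_pos.
  assert (0 < / INR b <= / 2) by (split; [apply Rinv_0_lt_compat; lra | apply Rinv_le_contravar; lra]).
  eapply Rle_trans; [|apply bern; lra].
  rewrite minus_INR by lia. simpl. right. field. lra.
Qed.

Lemma D1_01 d : 0 <= mu b 1 d <= 1.
Proof. apply (dens_bounds (cntF (Delta b 1) d)). apply (D1_dist b hb). Qed.

Lemma D1_geo : forall j, mu b 1 (- Z.of_nat j)%Z <= rho ^ j.
Proof.
  intros j. induction j as [j IH] using (well_founded_induction lt_wf).
  pose proof rho_bounds as Hr. pose proof INRb_pos.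
  assert (Hib : 0 < / INR b) by (apply Rinv_0_lt_compat; lra).
  rewrite (D1_rec b hb).
  replace (Z.eqb 1 (- Z.of_nat j)) with false by (symmetry; apply Z.eqb_neq; lia).
  rewrite Rmult_0_r, Rplus_0_l.
  destruct (Nat.lt_ge_cases j (b - 1)) as [Hj|Hj].
  - pose proof (D1_01 (- Z.of_nat j + Z.of_nat (b - 1))%Z) as [_ H1].
    apply Rle_trans with (/ INR b); [nra|].
    apply Rle_trans with (rho ^ (b - 1)); [apply invb_le|].
    replace (b - 1)%nat with (j + (b - 1 - j))%nat by lia. rewrite pow_add.
    assert (0 <= rho ^ j) by (apply pow_le; lra).
    assert (rho ^ (b - 1 - j) <= 1) by (apply pow_le1; lra). nra.
  - replace (- Z.of_nat j + Z.of_nat (b - 1))%Z with (- Z.of_nat (j - (b - 1)))%Z by lia.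
    assert (Hlt : (j - (b - 1) < j)%nat) by lia.
    specialize (IH _ Hlt).
    pose proof invb_le.
    replace j with ((b - 1) + (j - (b - 1)))%nat at 2 by lia. rewrite pow_add.
    pose proof (D1_01 (- Z.of_nat (j - (b - 1)))%Z).
    assert (0 <= rho ^ (j - (b - 1))) by (apply pow_le; lra).
    apply Rle_trans with (/ INR b * rho ^ (j - (b - 1))); [nra|].
    apply Rmult_le_compat_r; auto.
Qed.

Lemma zsum_neg_bound (h : Z -> R) :
  (forall d, (2 <= d)%Z -> h d = 0) ->
  (forall j, Rabs (h (- Z.of_nat (S j))%Z) <= INR (S j) * INR (S (S j)) * rho ^ j) ->
  zsummable h.
Proof.
  intros H1 H2. split.
  - apply (exs_ev0 _ 2). intros j Hj. apply H1. lia.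
  - apply (@ex_series_le _ R_CompleteNormedModule (fun j => h (- Z.of_nat (S j))%Z) (fun j => INR (S j) * INR (S (S j)) * rho ^ j)).
    + intros n. apply H2.
    + apply majorant. apply rho_bounds.
Qed.

Lemma D1_good : good (mu b 1).
Proof.
  pose proof rho_bounds as Hr.
  assert (Hg : forall j, 0 <= mu b 1 (- Z.of_nat (S j))%Z <= rho ^ j).
  { intros j. split; [apply D1_01|]. eapply Rle_trans; [apply D1_geo|].
    simpl. assert (0 <= rho ^ j) by (apply pow_le; lra). nra. }
  assert (Hj : forall j, 1 <= INR (S j)).
  { intros j. rewrite S_INR. pose proof (pos_INR j). lra. }
  assert (Hp : forall j, 0 <= rho ^ j) by (intros; apply pow_le; lra).
  assert (EI : forall j, IZR (- Z.of_nat (S j)) = - INR (S j)).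
  { intros j. rewrite opp_IZR, <- INR_IZR_INZ. reflexivity. }
  split; [|split]; apply zsum_neg_bound.
  - intros d Hd. apply (D1_big b hb). auto.
  - intros j. specialize (Hg j). rewrite Rabs_pos_eq by lra.
    pose proof (Hj (S j)). specialize (Hj j). specialize (Hp j). apply Rle_trans with (rho ^ j); [lra|]. assert (1 <= INR (S j) * INR (S (S j))) by nra. nra.
  - intros d Hd. rewrite (D1_big b hb) by auto. ring.
  - intros j. rewrite EI. specialize (Hg j). specialize (Hp j). pose proof (Hj j). pose proof (Hj (S j)).
    rewrite Rabs_mult, Rabs_Ropp, !Rabs_pos_eq by lra.
    apply Rle_trans with (INR (S j) * rho ^ j); [nra|].
    assert (0 <= INR (S j) * rho ^ j * (INR (S (S j)) - 1)) by (apply Rmult_le_pos; nra).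
    nra.
  - intros d Hd. rewrite (D1_big b hb) by auto. ring.
  - intros j. rewrite EI. specialize (Hg j). specialize (Hp j). pose proof (Hj j). pose proof (Hj (S j)).
    assert (E : (- INR (S j)) ^ 2 = INR (S j) * INR (S j)) by ring. rewrite E.
    rewrite Rabs_mult, !Rabs_pos_eq by nra.
    apply Rle_trans with (INR (S j) * INR (S j) * rho ^ j); [nra|].
    rewrite (S_INR (S j)). assert (0 <= INR (S j) * rho ^ j) by nra. nra.
Qed.

End B.

Lemma pm0_good : good pm0 /\ M0 pm0 = 1 /\ M1 pm0 = 0 /\ M2 pm0 = 0.
Proof.
  assert (E1 : (fun d => IZR d * pm0 d) = (fun _ => 0)).
  { apply functional_extensionality; intros d. unfold pm0.
    destruct (Z.eqb_spec 0 d); [subst; simpl; ring | ring]. }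
  assert (E2 : (fun d => IZR d ^ 2 * pm0 d) = (fun _ => 0)).
  { apply functional_extensionality; intros d. unfold pm0.
    destruct (Z.eqb_spec 0 d); [subst; simpl; ring | ring]. }
  assert (Z0 : zsummable pm0).
  { split.
    - apply (exs_ev0 _ 1). intros j Hj. unfold pm0. replace (Z.eqb 0 (Z.of_nat j)) with false; auto.
      symmetry. apply Z.eqb_neq. lia.
    - apply (exs_ev0 _ 0). intros j Hj. unfold pm0. replace (Z.eqb 0 (- Z.of_nat (S j))) with false; auto;
      symmetry; apply Z.eqb_neq; lia. }
  unfold good, M0, M1, M2. rewrite E1, E2.
  split; [split; [exact Z0 | split; apply zsummable_zero]|].
  rewrite zsum_zero. split; [|split; reflexivity].
  destruct Z0 as [A B]. unfold zsum.
  rewrite (Series_incr_1 _ A).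
  rewrite (Series_ext (fun k => pm0 (Z.of_nat (S k))) (fun _ => 0)).
  2:{ intros k. unfold pm0. replace (Z.eqb 0 (Z.of_nat (S k))) with false; auto;
      symmetry; apply Z.eqb_neq; lia. }
  rewrite (Series_ext (fun j => pm0 (- Z.of_nat (S j))%Z) (fun _ => 0)).
  2:{ intros k. unfold pm0. replace (Z.eqb 0 (- Z.of_nat (S k))) with false; auto;
      symmetry; apply Z.eqb_neq; lia. }
  rewrite Series_zero. unfold pm0. simpl. ring.
Qed.

Section C.
Variable b : nat.
Hypothesis hb : (2 <= b)%nat.

Lemma D1_moments : M0 (mu b 1) = 1 /\ M1 (mu b 1) = 0.
Proof.
  set (k := INR (b - 1)).
  set (c := (- Z.of_nat (b - 1))%Z).
  assert (Ek : k = INR b - 1) by (unfold k; rewrite minus_INR by lia; simpl; ring).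
  assert (Ec : IZR c = - k) by (unfold c, k; rewrite opp_IZR, <- INR_IZR_INZ; reflexivity).
  pose proof (INRb_pos b hb).
  assert (Emu : mu b 1 = fun d => / INR b * (k * pm0 (d - 1)%Z + mu b 1 (d - c)%Z)).
  { apply functional_extensionality; intros d. rewrite (D1_rec b hb). f_equal. f_equal.
    - f_equal. unfold pm0. destruct (Z.eqb_spec 1 d); destruct (Z.eqb_spec 0 (d - 1)); auto; lia.
    - f_equal. unfold c. lia. }
  destruct pm0_good as [Gp [P0 [P1 P2]]].
  destruct (good_shift pm0 1 Gp) as [Gps [Q0 [Q1 Q2]]].
  destruct (good_shift (mu b 1) c (D1_good b hb)) as [Gms [R0 [R1 R2]]].
  destruct Gps as [Z0 [Z1 Z2]]. destruct Gms as [W0 [W1 W2]].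
  assert (HM0 : M0 (mu b 1) = / INR b * (k * 1 + M0 (mu b 1))).
  { unfold M0 at 1. rewrite Emu at 1. rewrite zsum_scal, zsum_plus, zsum_scal.
    - fold (M0 (fun d => pm0 (d - 1)%Z)). fold (M0 (fun d => mu b 1 (d - c)%Z)).
      rewrite Q0, R0, P0. reflexivity.
    - apply zsummable_scal; auto.
    - auto. }
  assert (HM0' : M0 (mu b 1) = 1).
  { assert (M0 (mu b 1) * INR b = k + M0 (mu b 1)) by (rewrite HM0 at 1; field; lra).
    rewrite Ek in H0. nra. }
  split; auto.
  assert (HM1 : M1 (mu b 1) = / INR b * (k * (0 + 1 * 1) + (M1 (mu b 1) + IZR c * 1))).
  { unfold M1 at 1.
    assert (EE : (fun d => IZR d * mu b 1 d) =
      (fun d => / INR b * (k * (IZR d * pm0 (d - 1)%Z) + IZR d * mu b 1 (d - c)%Z))).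
    { apply functional_extensionality; intros d.
      rewrite (equal_f Emu d). ring. }
    rewrite EE.
    rewrite zsum_scal, zsum_plus, zsum_scal.
    - fold (M1 (fun d => pm0 (d - 1)%Z)). fold (M1 (fun d => mu b 1 (d - c)%Z)).
      rewrite Q1, R1, P0, P1, HM0'. reflexivity.
    - apply zsummable_scal; auto.
    - auto. }
  rewrite Ec in HM1.
  assert (M1 (mu b 1) * INR b = M1 (mu b 1)) by (rewrite HM1 at 1; field; lra).
  nra.
Qed.

End C.



Lemma rsum_minus f g n : rsum (fun i => f i - g i) n = rsum f n - rsum g n.
Proof. induction n; simpl; [lra|]. rewrite IHn. lra. Qed.

Lemma rsum_perm (h : nat -> R) r B : (r <= B)%nat ->
  rsum (fun u => h (if (u + r <? B)%nat then (u + r)%nat else (u + r - B)%nat)) B = rsum h B.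
Proof.
  intros H.
  replace B with ((B - r) + r)%nat at 1 by lia.
  rewrite rsum_add.
  rewrite (rsum_ext_lt _ (fun i => h (r + i)%nat)).
  2:{ intros i Hi. destruct (Nat.ltb_spec (i + r) B); [f_equal; lia | lia]. }
  rewrite (rsum_ext_lt (fun i => h (if (B - r + i + r <? B)%nat then (B - r + i + r)%nat else (B - r + i + r - B)%nat)) h).
  2:{ intros i Hi. destruct (Nat.ltb_spec (B - r + i + r) B); [lia | f_equal; lia]. }
  assert (E : rsum h B = rsum h (r + (B - r))) by (f_equal; lia).
  rewrite E, rsum_add. ring.
Qed.

Section D.
Variable b : nat.
Hypothesis hb : (2 <= b)%nat.

Definition Pg (r u : nat) : Z -> R := if (u + r <? b ^ r)%nat then pm0 else mu b 1.

Definition qg (r : nat) : Z -> R :=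
  fun d => / INR (b ^ r) * rsum (fun u => Pg r u (d - cgen b r (b ^ r) u)%Z) (b ^ r).

Lemma Bpos m : (1 <= b ^ m)%nat.
Proof. apply Nat.le_succ_l, Nat.neq_0_lt_0, Nat.pow_nonzero; lia. Qed.

Lemma gen_dist r : has_dist (Delta b r) (qg r).
Proof.
  assert (Hr : (r < b ^ r)%nat) by (apply Nat.pow_gt_lin_r; lia).
  apply (mix_dist (Delta b r) (fun u => if (u + r <? b ^ r)%nat then (fun _ => 0%Z) else Delta b 1)
    (cgen b r (b ^ r)) (Pg r) (b ^ r) (Bpos r)).
  - intros q u Hu. rewrite Delta_gen by auto.
    destruct (Nat.ltb_spec (u + r) (b ^ r)); reflexivity.
  - intros u Hu. unfold Pg. destruct (Nat.ltb_spec (u + r) (b ^ r)).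
    + apply dist_zero.
    + apply D1_dist; auto.
Qed.

Lemma mu_gen r : mu b r = qg r.
Proof. apply functional_extensionality. apply mu_of_dist. apply gen_dist. Qed.

Lemma mu_dist r : has_dist (Delta b r) (mu b r).
Proof. rewrite mu_gen. apply gen_dist. Qed.

Lemma gen_good r : good (mu b r) /\ M0 (mu b r) = 1 /\ M1 (mu b r) = 0.
Proof.
  assert (Hr : (r < b ^ r)%nat) by (apply Nat.pow_gt_lin_r; lia).
  assert (HP : forall u, (u < b ^ r)%nat -> good (Pg r u) /\ M0 (Pg r u) = 1 /\ M1 (Pg r u) = 0).
  { intros u Hu. unfold Pg. destruct (Nat.ltb_spec (u + r) (b ^ r)).
    - destruct pm0_good as [A [B [C _]]]. auto.
    - destruct (D1_moments b hb). split; auto. apply D1_good; auto. }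
  destruct (mix_good (Pg r) (cgen b r (b ^ r)) (b ^ r)) as [G [E0 [E1 _]]].
  { intros u Hu. apply HP; auto. }
  rewrite mu_gen. unfold qg. split; [exact G|]. split.
  - rewrite E0. rewrite (rsum_ext_lt _ (fun _ => 1)) by (intros u Hu; apply HP; auto).
    rewrite rsum_const. field. apply not_0_INR. pose proof (Bpos r). lia.
  - rewrite E1.
    rewrite (rsum_ext_lt _ (fun u => INR (digsum b (if (u + r <? b ^ r)%nat then (u + r)%nat else (u + r - b ^ r)%nat))
       - INR (digsum b u))).
    + rewrite rsum_minus. rewrite (rsum_perm (fun u => INR (digsum b u))) by lia. ring.
    + intros u Hu. destruct (HP u Hu) as [_ [H0 H1]]. rewrite H0, H1.
      unfold cgen. destruct (Nat.ltb_spec (u + r) (b ^ r));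
      rewrite minus_IZR, <- !INR_IZR_INZ; ring.
Qed.

End D.



Lemma rsum_mul f B k : rsum f (B * k) = rsum (fun w => rsum (fun v => f (B * w + v)%nat) B) k.
Proof.
  induction k; simpl.
  - rewrite Nat.mul_0_r. reflexivity.
  - rewrite Nat.mul_succ_r, rsum_add, IHk. reflexivity.
Qed.

Lemma rsum_first' f n : (1 <= n)%nat -> rsum f n = f 0%nat + rsum (fun i => f (S i)) (n - 1).
Proof. intros H. destruct n; [lia|]. rewrite rsum_first. f_equal. f_equal. lia. Qed.

Section E.
Variable b : nat.
Hypothesis hb : (2 <= b)%nat.

Definition e (u : nat) : R := INR (digsum b (u - 1)) - INR (digsum b u).
Definition fS (u : nat) : R := if (u =? 0)%nat then 0 else e u ^ 2.
Definition Sm (m : nat) : R := rsum fS (b ^ m).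

Lemma inner m w : (w < b)%nat ->
  rsum (fun v => fS (b ^ m * w + v)%nat) (b ^ m) =
  (if (w =? 0)%nat then 0 else (INR m * INR (b - 1) - 1) ^ 2) + Sm m.
Proof.
  intros Hw. pose proof (Bpos b hb m) as HB.
  unfold Sm. rewrite !rsum_first' by auto.
  f_equal.
  - destruct (Nat.eqb_spec w 0) as [H|H].
    + subst. rewrite Nat.mul_0_r. reflexivity.
    + unfold fS. replace (b ^ m * w + 0 =? 0)%nat with false by (symmetry; apply Nat.eqb_neq; nia).
      unfold e. f_equal.
      replace (b ^ m * w + 0 - 1)%nat with (b ^ m * (w - 1) + (b ^ m - 1))%nat by nia.
      rewrite !digsum_block by lia.
      rewrite digsum_full by lia. rewrite !(digsum_small b hb) by lia.
      rewrite !plus_INR, mult_INR, !minus_INR by lia. simpl. ring.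
  - rewrite (rsum_first' _ (b ^ m)) by auto. unfold fS at 2. simpl (0 =? 0)%nat. rewrite Rplus_0_l.
    apply rsum_ext_lt. intros i Hi.
    unfold fS. replace (b ^ m * w + S i =? 0)%nat with false by (symmetry; apply Nat.eqb_neq; lia).
    simpl (S i =? 0)%nat. unfold e. f_equal.
    replace (b ^ m * w + S i - 1)%nat with (b ^ m * w + i)%nat by lia.
    replace (S i - 1)%nat with i by lia.
    rewrite !digsum_block by lia. rewrite !plus_INR. ring.
Qed.

Lemma Sm_rec m : Sm (S m) = INR b * Sm m + INR (b - 1) * (INR m * INR (b - 1) - 1) ^ 2.
Proof.
  unfold Sm at 1. rewrite Nat.pow_succ_r by lia. rewrite Nat.mul_comm, rsum_mul.
  rewrite (rsum_ext_lt _ (fun w => (if (w =? 0)%nat then 0 else (INR m * INR (b - 1) - 1) ^ 2) + Sm m))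
    by (intros; apply inner; auto).
  rewrite rsum_plus, rsum_const.
  rewrite rsum_first' by lia. simpl (0 =? 0)%nat.
  rewrite (rsum_ext_lt _ (fun _ => (INR m * INR (b - 1) - 1) ^ 2)) by (intros; reflexivity).
  rewrite rsum_const. ring.
Qed.

Lemma T_id m : (INR m * INR (b - 1)) ^ 2 + Sm m = INR b ^ (S m) - INR b.
Proof.
  assert (Eb : INR (b - 1) = INR b - 1) by (rewrite minus_INR by lia; simpl; ring).
  induction m.
  - unfold Sm. simpl. unfold fS. simpl. ring.
  - rewrite Sm_rec. rewrite Eb in *. rewrite S_INR.
    set (X := INR b ^ S m) in *.
    change (INR b ^ S (S m)) with (INR b * X).
    assert (Sm m = X - INR b - (INR m * (INR b - 1)) ^ 2) by lra.
    rewrite H. ring.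
Qed.

End E.

Theorem mainTheorem12 (b rh m : nat) (hb : (2 <= b)%nat) (hm : (1 <= m)%nat) :
  Var_mu b (b ^ m * rh + b ^ m - 1)%nat =
    / INR b ^ m * Var_mu b rh
    + (1 - / INR b ^ m) * Var_mu b (rh + 1)%nat
    + INR b - / INR b ^ (m - 1).
Proof.
  set (B := (b ^ m)%nat).
  set (r := (B * rh + B - 1)%nat).
  pose proof (Bpos b hb m) as HB. fold B in HB.
  set (P := fun u => if (u =? 0)%nat then mu b rh else mu b (rh + 1)).
  assert (Hd : has_dist (Delta b r) (fun d => / INR B * rsum (fun u => P u (d - cmain b B u)%Z) B)).
  { apply (mix_dist (Delta b r) (fun u => if (u =? 0)%nat then Delta b rh else Delta b (rh + 1))
      (cmain b B) P B HB).
    - intros q u Hu. unfold r, B. rewrite Delta_main by auto.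
      destruct (u =? 0)%nat; reflexivity.
    - intros u Hu. unfold P. destruct (u =? 0)%nat; apply mu_dist; auto. }
  assert (Emu : mu b r = (fun d => / INR B * rsum (fun u => P u (d - cmain b B u)%Z) B)).
  { apply functional_extensionality. apply mu_of_dist. auto. }
  assert (HP : forall u, (u < B)%nat -> good (P u) /\ M0 (P u) = 1 /\ M1 (P u) = 0).
  { intros u Hu. unfold P. destruct (u =? 0)%nat; apply gen_good; auto. }
  destruct (mix_good P (cmain b B) B) as [_ [_ [_ E2]]].
  { intros u Hu. apply HP; auto. }
  rewrite <- Emu in E2.
  change (Var_mu b r) with (M2 (mu b r) - M1 (mu b r) ^ 2).
  change (Var_mu b rh) with (M2 (mu b rh) - M1 (mu b rh) ^ 2).
  change (Var_mu b (rh + 1)) with (M2 (mu b (rh + 1)) - M1 (mu b (rh + 1)) ^ 2).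
  destruct (gen_good b hb r) as [_ [_ Z1]].
  destruct (gen_good b hb rh) as [_ [_ Z2]].
  destruct (gen_good b hb (rh + 1)) as [_ [_ Z3]].
  rewrite Z1, Z2, Z3, E2.
  rewrite (rsum_ext_lt _ (fun u => M2 (P u) + IZR (cmain b B u) ^ 2)).
  2:{ intros u Hu. destruct (HP u Hu) as [_ [H0 H1]]. rewrite H0, H1. ring. }
  rewrite rsum_first' by auto.
  rewrite rsum_plus.
  assert (Ec0 : IZR (cmain b B 0) = INR m * INR (b - 1)).
  { replace (cmain b B 0) with (Z.of_nat (digsum b (B - 1))) by reflexivity. rewrite <- INR_IZR_INZ. unfold B. rewrite digsum_full by auto.
    apply mult_INR. }
  assert (ES : rsum (fun i => IZR (cmain b B (S i)) ^ 2) (B - 1) = Sm b m).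
  { unfold Sm. fold B. rewrite (rsum_first' (fS b)) by auto. unfold fS at 1. simpl (0 =? 0)%nat.
    rewrite Rplus_0_l. apply rsum_ext_lt. intros i Hi. unfold fS. simpl (S i =? 0)%nat.
    unfold cmain. simpl (S i =? 0)%nat. cbv iota. unfold e. rewrite minus_IZR, <- !INR_IZR_INZ. reflexivity. }
  unfold P at 1. simpl (0 =? 0)%nat. rewrite Ec0.
  rewrite (rsum_ext_lt (fun i => M2 (P (S i))) (fun _ => M2 (mu b (rh + 1)))) by (intros; reflexivity).
  rewrite rsum_const.
  rewrite ES.
  pose proof (T_id b hb m) as HT.
  assert (EB : INR B = INR b ^ m) by (unfold B; apply pow_INR).
  assert (EB1 : INR (B - 1) = INR B - 1) by (rewrite minus_INR by lia; simpl; ring).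
  rewrite EB1, EB.
  destruct m as [|m']; [lia|].
  replace (S m' - 1)%nat with m' by lia.
  pose proof (INRb_pos b hb).
  assert (Hx : INR b ^ m' <> 0) by (apply pow_nonzero; lra).
  change (INR b ^ S (S m')) with (INR b * (INR b * INR b ^ m')) in HT.
  change (INR b ^ S m') with (INR b * INR b ^ m').
  assert (HT' : (INR (S m') * INR (b - 1)) ^ 2 = INR b * (INR b * INR b ^ m') - INR b - Sm b (S m')) by lra.
  rewrite HT'.
  field. split; lra.
Qed.
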